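(* Consider the labeled Galton–Watson tree $\mathcal{T}$ with $\omega<\omega_0$, where $\omega_0=1/\tau$ and $\tau=\frac{1}{r(a+b)}\sum_{\ell\in\mathcal{L}}|a\mu(\ell)-b\nu(\ell)|$. Then as $R\to\infty$, for all $x\in\{1,\dots,r\}$, \[\mathbb{P}(\sigma_\rho=x\mid\mathcal{T},\sigma_{\partial\mathcal{T}_R})\to\frac1r\] asymptotically almost surely (in probability).
   Context: Labeled Galton–Watson tree $\mathcal{T}$ with root $\rho$, parameters $r\ge2$, positive constants $a,b$, $\omega>0$, finite label set $\mathcal{L}$ and distinct probability measures $\mu,\nu$ on $\mathcal{L}$: each node has a Poisson number of children with mean $d=\omega\frac{a+(r-1)b}{r(a+b)}$; the root's attribute $\sigma_\rho$ is uniform on $\{1,\dots,r\}$; each child independently has its parent's attribute with probability $\frac{a}{a+(r-1)b}$ and each of the $r-1$ other attributes with probability $\frac{b}{a+(r-1)b}$; each parent–child edge is independently labeled with distribution $\mu$ if the two attributes agree and $\nu$ otherwise. $\mathcal{T}_R$ is the tree truncated at depth $R$, $\partial\mathcal{T}_R$ its nodes at depth $R$, and $\sigma_{\partial\mathcal{T}_R}$ their attributes; conditioning on $\mathcal{T}$ means on the tree structure together with its edge labels. *)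

(* Defs.v *)
From Stdlib Require Import Reals List Lra Arith Factorial.
Open Scope R_scope.

Definition rsum (n : nat) (f : nat -> R) : R :=
  fold_right Rplus 0 (map f (seq 0 n)).

(* Observed data at depth R: the (planar) tree T_R with its edge labels,
   and the attributes of the nodes at depth R (stored in the leaves).
   Nodes at depth < R are [Node] (possibly with no children). *)
Inductive obs (L : Type) : Type :=
| Leaf : nat -> obs L
| Node : list (L * obs L) -> obs L.
Arguments Leaf {L} _.
Arguments Node {L} _.

Definition poisson (lam : R) (k : nat) : R :=
  exp (- lam) * lam ^ k / INR (fact k).

Section GW.
Variables (L : Type) (r : nat) (a b omega : R) (mu nu : L -> R).

Definition deg : R := omega * (a + INR (r - 1) * b) / (INR r * (a + b)).

Definition trans (x y : nat) : R :=
  if Nat.eqb x y then a / (a + INR (r - 1) * b) else b / (a + INR (r - 1) * b).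

(* edge-label distribution given parent/child attributes *)
Definition labp (x y : nat) (l : L) : R :=
  if Nat.eqb x y then mu l else nu l.

(* lik x t n = probability that the depth-n truncation of the labeled GW tree
   rooted at a node with attribute x, together with the attributes of its
   depth-n nodes, equals the observation t.  Ill-formed observations get 0. *)
Fixpoint lik (x : nat) (t : obs L) (n : nat) {struct n} : R :=
  match n, t with
  | O, Leaf y => if Nat.eqb x y then 1 else 0
  | S m, Node cs =>
      poisson deg (length cs) *
      fold_right (fun c acc =>
          rsum r (fun y => trans x y * labp x y (fst c) * lik y (snd c) m) * acc)
        1 cs
  | _, _ => 0
  end.

Definition obs_prob (t : obs L) (R0 : nat) : R :=
  / INR r * rsum r (fun x => lik x t R0).

Definition posterior (x : nat) (t : obs L) (R0 : nat) : R :=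
  lik x t R0 / rsum r (fun y => lik y t R0).

Definition tau (labs : list L) : R :=
  / (INR r * (a + b)) * fold_right Rplus 0 (map (fun l => Rabs (a * mu l - b * nu l)) labs).

(* The probability (a countable sum of nonnegative terms over observations)
   of the event {t : eps < |P(sigma_rho = x | t) - 1/r|} at depth R0 is at most
   delta: every finite partial sum over distinct observations is <= delta. *)
Definition bad_prob_le (x : nat) (eps : R) (R0 : nat) (delta : R) : Prop :=
  forall s : list (obs L), NoDup s ->
    fold_right Rplus 0
      (map (fun t => if Rlt_dec eps (Rabs (posterior x t R0 - / INR r))
                     then obs_prob t R0 else 0) s)
    <= delta.
End GW.

(* Main.v *)
Require Import Defs.
From Stdlib Require Import Reals List Lra Arith Lia Classical Factorial.
Open Scope R_scope.

Definition lsum {A} (f : A -> R) (l : list A) : R := fold_right Rplus 0 (map f l).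

Lemma lsum_nil {A} (f : A -> R) : lsum f nil = 0. Proof. reflexivity. Qed.
Lemma lsum_cons {A} (f : A -> R) a l : lsum f (a :: l) = f a + lsum f l.
Proof. reflexivity. Qed.
Lemma lsum_app {A} (f : A -> R) l1 l2 : lsum f (l1 ++ l2) = lsum f l1 + lsum f l2.
Proof. induction l1; simpl; rewrite ?lsum_cons; unfold lsum in *; simpl; lra. Qed.
Lemma lsum_map {A B} (f : B -> R) (h : A -> B) l : lsum f (map h l) = lsum (fun x => f (h x)) l.
Proof. unfold lsum; rewrite map_map; reflexivity. Qed.
Lemma lsum_flat_map {A B} (f : B -> R) (h : A -> list B) l :
  lsum f (flat_map h l) = lsum (fun x => lsum f (h x)) l.
Proof. induction l; simpl; [reflexivity|]. rewrite lsum_app, lsum_cons, IHl; reflexivity. Qed.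
Lemma lsum_ext_in {A} (f g : A -> R) l : (forall x, In x l -> f x = g x) -> lsum f l = lsum g l.
Proof. induction l; intros H; [reflexivity|]. rewrite !lsum_cons, H, IHl; simpl; auto; intros; apply H; simpl; auto. Qed.
Lemma lsum_le_in {A} (f g : A -> R) l : (forall x, In x l -> f x <= g x) -> lsum f l <= lsum g l.
Proof. induction l; intros H; [unfold lsum; simpl; lra|]. rewrite !lsum_cons.
  assert (f a <= g a) by (apply H; simpl; auto). assert (lsum f l <= lsum g l) by (apply IHl; intros; apply H; simpl; auto). lra. Qed.
Lemma lsum_nonneg {A} (f : A -> R) l : (forall x, 0 <= f x) -> 0 <= lsum f l.
Proof. intros H; induction l; [unfold lsum; simpl; lra|]. rewrite lsum_cons. specialize (H a); lra. Qed.
Lemma lsum_plus {A} (f g : A -> R) l : lsum (fun x => f x + g x) l = lsum f l + lsum g l.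
Proof. induction l; [unfold lsum; simpl; lra|]. rewrite !lsum_cons, IHl; lra. Qed.
Lemma lsum_scal_l {A} (c : R) (f : A -> R) l : lsum (fun x => c * f x) l = c * lsum f l.
Proof. induction l; [unfold lsum; simpl; lra|]. rewrite !lsum_cons, IHl; lra. Qed.
Lemma lsum_scal_r {A} (c : R) (f : A -> R) l : lsum (fun x => f x * c) l = lsum f l * c.
Proof. induction l; [unfold lsum; simpl; lra|]. rewrite !lsum_cons, IHl; lra. Qed.
Lemma lsum_swap {A B} (F : A -> B -> R) l1 l2 :
  lsum (fun i => lsum (fun j => F i j) l2) l1 = lsum (fun j => lsum (fun i => F i j) l1) l2.
Proof. induction l1; simpl.
  - unfold lsum at 1; simpl. induction l2; [reflexivity|]. rewrite lsum_cons, <- IHl2. unfold lsum; simpl; lra.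
  - rewrite lsum_cons, IHl1, <- lsum_plus. apply lsum_ext_in; intros; rewrite lsum_cons; reflexivity. Qed.
Lemma lsum_abs {A} (f : A -> R) l : Rabs (lsum f l) <= lsum (fun x => Rabs (f x)) l.
Proof. induction l; [unfold lsum; simpl; rewrite Rabs_R0; lra|]. rewrite !lsum_cons.
  eapply Rle_trans; [apply Rabs_triang|]. lra. Qed.
Lemma lsum_const {A} (c : R) (l : list A) : lsum (fun _ => c) l = INR (length l) * c.
Proof. induction l; [unfold lsum; simpl; lra|]. rewrite lsum_cons, IHl; simpl length; rewrite S_INR; lra. Qed.

Lemma lsum_incl {A} (F : A -> R) (S T : list A) : (forall x, 0 <= F x) -> NoDup S ->
  (forall x, In x S -> F x <> 0 -> In x T) -> lsum F S <= lsum F T.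
Proof.
  intros Hpos HS; revert T; induction S as [|a S IH]; intros T HT.
  - unfold lsum at 1; simpl. apply lsum_nonneg; auto.
  - apply NoDup_cons_iff in HS as [Ha HS]. rewrite lsum_cons.
    destruct (Req_dec (F a) 0) as [E|E].
    + rewrite E, Rplus_0_l. apply IH; auto. intros; apply HT; simpl; auto.
    + destruct (in_split a T) as [T1 [T2 ->]]. { apply HT; simpl; auto. }
      rewrite lsum_app, lsum_cons. assert (lsum F S <= lsum F (T1 ++ T2)).
      { apply IH; auto. intros x Hx HF. specialize (HT x (or_intror Hx) HF).
        apply in_app_iff in HT. apply in_app_iff. destruct HT as [H|H]; auto.
        destruct H as [H|H]; auto. subst; contradiction. }
      rewrite lsum_app in H. lra.
Qed.

Lemma exists_nodup {A} (l : list A) : exists l', NoDup l' /\ forall x, In x l <-> In x l'.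
Proof.
  induction l as [|a l [l' [H1 H2]]].
  - exists nil; split; [constructor|simpl; tauto].
  - destruct (classic (In a l')) as [Hi|Hi].
    + exists l'; split; auto. intros x; simpl; rewrite H2; split; [intros [<-|H]; auto | auto].
    + exists (a :: l'); split; [constructor; auto|]. intros x; simpl; rewrite H2; tauto.
Qed.

Definition rsum' (n : nat) (f : nat -> R) : R := lsum f (seq 0 n).

Lemma rsum_S n f : lsum f (seq 0 (S n)) = lsum f (seq 0 n) + f n.
Proof. rewrite seq_S, lsum_app. simpl. unfold lsum at 2; simpl. lra. Qed.

Lemma rsum_delta n x (f : nat -> R) : (x < n)%nat ->
  lsum (fun y => if Nat.eqb x y then f y else 0) (seq 0 n) = f x.
Proof.
  induction n; intros H; [lia|]. rewrite rsum_S.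
  destruct (Nat.eq_dec x n) as [->|Hn].
  - rewrite Nat.eqb_refl. rewrite (lsum_ext_in _ (fun _ => 0)).
    + rewrite lsum_const; lra.
    + intros y Hy; apply in_seq in Hy. destruct (Nat.eqb_spec n y); [lia|auto].
  - rewrite IHn by lia. destruct (Nat.eqb_spec x n); [lia|lra].
Qed.

Fixpoint psum (w : nat -> R) (K : nat) : R :=
  match K with O => w O | S K' => w O + psum (fun k => w (S k)) K' end.

Section Prod.
Variable C : Type.
Definition Pr (g : C -> R) (cs : list C) : R := fold_right (fun c acc => g c * acc) 1 cs.

Lemma Pr_nonneg g cs : (forall c, 0 <= g c) -> 0 <= Pr g cs.
Proof. intros H; induction cs; simpl; [lra|]. apply Rmult_le_pos; auto. Qed.

Lemma decomp (SS : list (list C)) : exists H T, NoDup H /\ NoDup T /\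
  (forall t, In t T -> exists c, In (c :: t) SS) /\
  forall cs, In cs SS -> cs = nil \/ In cs (flat_map (fun c => map (cons c) T) H).
Proof.
  destruct (exists_nodup (flat_map (firstn 1) SS)) as [H [H1 H2]].
  destruct (exists_nodup (flat_map (fun cs => match cs with nil => nil | _ :: t => t :: nil end) SS)) as [T [T1 T2]].
  exists H, T; split; [|split]; auto. split.
  - intros t Ht. apply T2, in_flat_map in Ht as [[|c t'] [Hin Ht]]; simpl in Ht; [tauto|].
    destruct Ht as [<-|[]]; eauto.
  - intros [|c t] Hin; [auto|right]. apply in_flat_map. exists c; split.
    + apply H2, in_flat_map. exists (c :: t); simpl; auto.
    + apply in_map, T2, in_flat_map. exists (c :: t); simpl; auto.
Qed.

Lemma prod_bound (g : C -> R) : (forall c, 0 <= g c) ->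
  (forall s, NoDup s -> lsum g s <= 1) ->
  forall K w, (forall k, 0 <= w k) -> forall SS, NoDup SS -> (forall cs, In cs SS -> (length cs <= K)%nat) ->
  lsum (fun cs => w (length cs) * Pr g cs) SS <= psum w K.
Proof.
  intros Hg Hb K; induction K as [|K IH]; intros w Hw SS HS HK.
  - simpl. eapply Rle_trans. apply (lsum_incl _ SS (nil :: nil)); auto.
    + intros; apply Rmult_le_pos; auto; apply Pr_nonneg; auto.
    + intros [|c t] Hin _; [simpl; auto|]. specialize (HK _ Hin); simpl in HK; lia.
    + rewrite lsum_cons; unfold lsum; simpl; lra.
  - destruct (decomp SS) as [H [T [HH [HT [HTS HSP]]]]].
    eapply Rle_trans. apply (lsum_incl _ SS (nil :: flat_map (fun c => map (cons c) T) H)); auto.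
    + intros; apply Rmult_le_pos; auto; apply Pr_nonneg; auto.
    + intros cs Hin _. destruct (HSP cs Hin) as [->|Hc]; simpl; auto.
    + rewrite lsum_cons, lsum_flat_map. simpl.
      rewrite (lsum_ext_in _ (fun c => g c * lsum (fun t => w (S (length t)) * Pr g t) T)).
      2:{ intros c _. rewrite lsum_map, <- lsum_scal_l. apply lsum_ext_in; intros; simpl; ring. }
      rewrite lsum_scal_r.
      assert (A1 : 0 <= lsum g H) by (apply lsum_nonneg; auto).
      assert (A2 : lsum g H <= 1) by auto.
      assert (A3 : 0 <= lsum (fun t => w (S (length t)) * Pr g t) T).
      { apply lsum_nonneg; intros; apply Rmult_le_pos; auto; apply Pr_nonneg; auto. }
      assert (A4 : lsum (fun t => w (S (length t)) * Pr g t) T <= psum (fun k => w (S k)) K).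
      { apply (IH (fun k => w (S k))); auto. intros t Ht. destruct (HTS t Ht) as [c Hc].
        specialize (HK _ Hc); simpl in HK; lia. }
      assert (lsum g H * lsum (fun t => w (S (length t)) * Pr g t) T <= 1 * psum (fun k => w (S k)) K).
      { apply Rmult_le_compat; auto. }
      lra.
Qed.

Lemma psum_ext w v K : (forall k, w k = v k) -> psum w K = psum v K.
Proof. revert w v; induction K; intros w v H; simpl; rewrite H; auto. f_equal. apply IHK; auto. Qed.
Lemma psum_plus w v K : psum (fun k => w k + v k) K = psum w K + psum v K.
Proof. revert w v; induction K; intros w v; simpl; auto. rewrite IHK. ring. Qed.

Lemma psum_nonneg w K : (forall k, 0 <= w k) -> 0 <= psum w K.
Proof. revert w; induction K; intros w Hw; simpl; auto. specialize (IHK (fun k => w (S k))).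
  assert (0 <= w O) by auto. assert (0 <= psum (fun k => w (S k)) K) by auto. lra. Qed.

Lemma prod_diff (g g' : C -> R) D : 0 <= D -> (forall c, 0 <= g c) -> (forall c, 0 <= g' c) ->
  (forall s, NoDup s -> lsum g s <= 1) -> (forall s, NoDup s -> lsum g' s <= 1) ->
  (forall s, NoDup s -> lsum (fun c => Rabs (g c - g' c)) s <= D) ->
  forall K w, (forall k, 0 <= w k) -> forall SS, NoDup SS -> (forall cs, In cs SS -> (length cs <= K)%nat) ->
  lsum (fun cs => w (length cs) * Rabs (Pr g cs - Pr g' cs)) SS <= D * psum (fun k => INR k * w k) K.
Proof.
  intros HD Hg Hg' Hb Hb' Hd K; induction K as [|K IH]; intros w Hw SS HS HK.
  - simpl. rewrite Rmult_0_l, Rmult_0_r. eapply Rle_trans. apply (lsum_incl _ SS (nil :: nil)); auto.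
    + intros; apply Rmult_le_pos; auto; apply Rabs_pos.
    + intros [|c t] Hin _; [simpl; auto|]. specialize (HK _ Hin); simpl in HK; lia.
    + rewrite lsum_cons; unfold lsum; simpl. replace (1-1) with 0 by ring. rewrite Rabs_R0. lra.
  - destruct (decomp SS) as [H [T [HH [HT [HTS HSP]]]]].
    eapply Rle_trans. apply (lsum_incl _ SS (nil :: flat_map (fun c => map (cons c) T) H)); auto.
    + intros; apply Rmult_le_pos; auto; apply Rabs_pos.
    + intros cs Hin _. destruct (HSP cs Hin) as [->|Hc]; simpl; auto.
    + rewrite lsum_cons, lsum_flat_map. simpl. replace (1-1) with 0 by ring. rewrite Rabs_R0, Rmult_0_r, Rplus_0_l.
      set (w' := fun k => w (S k)).
      assert (HLT : forall t, In t T -> (length t <= K)%nat).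
      { intros t Ht. destruct (HTS t Ht) as [c Hc]. specialize (HK _ Hc); simpl in HK; lia. }
      eapply Rle_trans.
      { apply (lsum_le_in _ (fun c => Rabs (g c - g' c) * lsum (fun t => w' (length t) * Pr g t) T
                + g' c * lsum (fun t => w' (length t) * Rabs (Pr g t - Pr g' t)) T)).
        intros c _. rewrite lsum_map, <- lsum_scal_l, <- lsum_scal_l, <- lsum_plus.
        apply lsum_le_in; intros t _. simpl. unfold w'.
        assert (Hp : 0 <= Pr g t) by (apply Pr_nonneg; auto).
        assert (Hwt := Hw (S (length t))).
        replace (g c * Pr g t - g' c * Pr g' t) with ((g c - g' c) * Pr g t + g' c * (Pr g t - Pr g' t)) by ring.
        eapply Rle_trans. apply Rmult_le_compat_l; auto. apply Rabs_triang.
        rewrite !Rabs_mult, (Rabs_pos_eq (Pr g t)), (Rabs_pos_eq (g' c)); auto.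
        assert (0 <= Rabs (g c - g' c)) by apply Rabs_pos. right; ring. }
      rewrite lsum_plus, !lsum_scal_r.
      assert (A1 : 0 <= lsum (fun c => Rabs (g c - g' c)) H) by (apply lsum_nonneg; intros; apply Rabs_pos).
      assert (A2 : lsum (fun c => Rabs (g c - g' c)) H <= D) by auto.
      assert (A3 : 0 <= lsum (fun t => w' (length t) * Pr g t) T).
      { apply lsum_nonneg; intros; apply Rmult_le_pos; unfold w'; auto; apply Pr_nonneg; auto. }
      assert (A4 : lsum (fun t => w' (length t) * Pr g t) T <= psum w' K).
      { apply (prod_bound g); auto. unfold w'; auto. }
      assert (B1 : 0 <= lsum g' H) by (apply lsum_nonneg; auto).
      assert (B2 : lsum g' H <= 1) by auto.
      assert (B3 : 0 <= lsum (fun t => w' (length t) * Rabs (Pr g t - Pr g' t)) T).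
      { apply lsum_nonneg; intros; apply Rmult_le_pos; unfold w'; auto; apply Rabs_pos. }
      assert (B4 : lsum (fun t => w' (length t) * Rabs (Pr g t - Pr g' t)) T <= D * psum (fun k => INR k * w' k) K).
      { apply IH; unfold w'; auto. }
      assert (E1 : lsum (fun c => Rabs (g c - g' c)) H * lsum (fun t => w' (length t) * Pr g t) T <= D * psum w' K)
        by (apply Rmult_le_compat; auto).
      assert (E2 : lsum g' H * lsum (fun t => w' (length t) * Rabs (Pr g t - Pr g' t)) T <= 1 * (D * psum (fun k => INR k * w' k) K))
        by (apply Rmult_le_compat; auto).
      assert (E3 : forall K (v : nat -> R), psum (fun k => INR (S k) * v k) K = psum v K + psum (fun k => INR k * v k) K).
      { clear. intros K v. rewrite <- psum_plus. apply psum_ext. intros; rewrite S_INR; ring. }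
      simpl. rewrite Rmult_0_l, Rplus_0_l. unfold w' in *. rewrite E3. lra.
Qed.
End Prod.

Lemma psum_last w K : psum w (S K) = psum w K + w (S K).
Proof. revert w; induction K; intros w; simpl; [ring|]. change (w O + psum (fun k => w (S k)) (S K) = w O + psum (fun k => w (S k)) K + w (S (S K))). rewrite IHK. ring. Qed.
Lemma psum_sum w K : psum w K = sum_f_R0 w K.
Proof. induction K; [reflexivity|]. rewrite psum_last, IHK; reflexivity. Qed.
Lemma psum_scal c w K : psum (fun k => c * w k) K = c * psum w K.
Proof. revert w; induction K; intros w; simpl; [ring|]. rewrite IHK; ring. Qed.

Lemma poisson_nonneg lam k : 0 <= lam -> 0 <= poisson lam k.
Proof. intros H; unfold poisson. apply Rmult_le_pos; [apply Rmult_le_pos|].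
  - left; apply exp_pos.
  - apply pow_le; auto.
  - left; apply Rinv_0_lt_compat, INR_fact_lt_0. Qed.

Lemma exp_partial lam K : 0 <= lam -> sum_f_R0 (fun i => / INR (fact i) * lam ^ i) K <= exp lam.
Proof. intros H. apply growing_ineq.
  - intros n; cbn [sum_f_R0]. assert (0 <= / INR (fact (S n)) * lam ^ S n).
    { apply Rmult_le_pos; [left; apply Rinv_0_lt_compat, INR_fact_lt_0|apply pow_le; auto]. } lra.
  - exact (proj2_sig (exist_exp lam)). Qed.

Lemma poisson_psum lam K : 0 <= lam -> psum (poisson lam) K <= 1.
Proof. intros H. rewrite psum_sum.
  rewrite (sum_eq _ (fun i => (/ INR (fact i) * lam ^ i) * exp (- lam))).
  2:{ intros; unfold poisson; unfold Rdiv; ring. }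
  rewrite <- scal_sum.
  replace 1 with (exp (- lam) * exp lam) by (rewrite <- exp_plus; replace (-lam+lam) with 0 by ring; apply exp_0).
  apply Rmult_le_compat_l; [left; apply exp_pos|]. apply exp_partial; auto. Qed.

Lemma poisson_mean lam K : 0 <= lam -> psum (fun k => INR k * poisson lam k) K <= lam.
Proof. intros H. destruct K; simpl; [lra|]. rewrite Rmult_0_l, Rplus_0_l.
  rewrite (psum_ext (fun k => INR (S k) * poisson lam (S k)) (fun k => lam * poisson lam k)).
  2:{ intros k. unfold poisson. rewrite fact_simpl, mult_INR. simpl pow.
      assert (INR (S k) <> 0) by (apply not_0_INR; lia). assert (INR (fact k) <> 0) by apply INR_fact_neq_0.
      field; auto. }
  rewrite psum_scal. assert (psum (poisson lam) K <= 1) by (apply poisson_psum; auto).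
  assert (lam * psum (poisson lam) K <= lam * 1) by (apply Rmult_le_compat_l; auto). lra. Qed.

Section GWproof.
Variables (L : Type) (labs : list L) (r : nat) (a b omega : R) (mu nu : L -> R).
Hypotheses (Hr : (2 <= r)%nat) (Ha : 0 < a) (Hb : 0 < b) (Homega : 0 < omega)
  (Hmu_nonneg : forall l, 0 <= mu l) (Hmu_sum : fold_right Rplus 0 (map mu labs) = 1)
  (Hnu_nonneg : forall l, 0 <= nu l) (Hnu_sum : fold_right Rplus 0 (map nu labs) = 1)
  (Hlabs_full : forall l : L, In l labs) (Hlabs_nodup : NoDup labs).

Let Z := a + INR (r - 1) * b.
Lemma Z_pos : 0 < Z.
Proof. unfold Z. assert (0 <= INR (r - 1)) by apply pos_INR. assert (0 <= INR (r-1) * b) by (apply Rmult_le_pos; lra). lra. Qed.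

Lemma trans_nonneg x y : 0 <= trans r a b x y.
Proof. pose proof Z_pos. unfold trans; destruct Nat.eqb; unfold Rdiv; apply Rmult_le_pos; try lra; left; apply Rinv_0_lt_compat; unfold Z in *; lra. Qed.
Lemma labp_nonneg x y l : 0 <= labp L mu nu x y l.
Proof. unfold labp; destruct Nat.eqb; auto. Qed.
Lemma deg_nonneg : 0 <= deg r a b omega.
Proof. pose proof Z_pos. unfold deg. unfold Rdiv. apply Rmult_le_pos. apply Rmult_le_pos; unfold Z in *; lra.
  left; apply Rinv_0_lt_compat. apply Rmult_lt_0_compat; [apply lt_0_INR; lia|lra]. Qed.

Definition gfun (x m : nat) : L * obs L -> R :=
  fun c => rsum r (fun y => trans r a b x y * labp L mu nu x y (fst c) * lik L r a b omega mu nu y (snd c) m).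

Lemma lik_nonneg n : forall x t, 0 <= lik L r a b omega mu nu x t n.
Proof.
  induction n; intros x [y|cs]; simpl; try lra.
  - destruct Nat.eqb; lra.
  - apply Rmult_le_pos; [apply poisson_nonneg, deg_nonneg|].
    change (0 <= Pr _ (gfun x n) cs). apply Pr_nonneg. intros c. unfold gfun, rsum.
    apply lsum_nonneg. intros y. apply Rmult_le_pos; [apply Rmult_le_pos|]; auto using trans_nonneg, labp_nonneg.
Qed.

Lemma gfun_nonneg x m c : 0 <= gfun x m c.
Proof. unfold gfun, rsum. apply lsum_nonneg. intros y. apply Rmult_le_pos; [apply Rmult_le_pos|]; auto using trans_nonneg, labp_nonneg, lik_nonneg. Qed.

Lemma trans_decomp x y l : trans r a b x y * labp L mu nu x y l =
  b * nu l / Z + (if Nat.eqb x y then (a * mu l - b * nu l) / Z else 0).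
Proof. pose proof Z_pos. unfold trans, labp. fold Z. destruct Nat.eqb; field; lra. Qed.

Lemma gfun_decomp x m c : (x < r)%nat -> gfun x m c =
  lsum (fun y => b * nu (fst c) / Z * lik L r a b omega mu nu y (snd c) m) (seq 0 r)
  + (a * mu (fst c) - b * nu (fst c)) / Z * lik L r a b omega mu nu x (snd c) m.
Proof.
  intros Hx. unfold gfun, rsum. fold (lsum (fun y => trans r a b x y * labp L mu nu x y (fst c) * lik L r a b omega mu nu y (snd c) m) (seq 0 r)).
  rewrite (lsum_ext_in _ (fun y => b * nu (fst c) / Z * lik L r a b omega mu nu y (snd c) m +
     (if Nat.eqb x y then (a * mu (fst c) - b * nu (fst c)) / Z * lik L r a b omega mu nu y (snd c) m else 0))).
  2:{ intros y _. rewrite trans_decomp. destruct Nat.eqb; ring. }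
  rewrite lsum_plus. f_equal. apply (rsum_delta r x (fun y => (a * mu (fst c) - b * nu (fst c)) / Z * lik L r a b omega mu nu y (snd c) m)); auto.
Qed.

Lemma gfun_diff x x' m c : (x < r)%nat -> (x' < r)%nat ->
  Rabs (gfun x m c - gfun x' m c) = Rabs ((a * mu (fst c) - b * nu (fst c)) / Z) *
     Rabs (lik L r a b omega mu nu x (snd c) m - lik L r a b omega mu nu x' (snd c) m).
Proof. intros Hx Hx'. rewrite !gfun_decomp by auto. rewrite <- Rabs_mult. f_equal. ring. Qed.

Lemma trans_sum x : (x < r)%nat -> lsum (trans r a b x) (seq 0 r) = 1.
Proof.
  intros Hx. pose proof Z_pos.
  rewrite (lsum_ext_in _ (fun y => b / Z + (if Nat.eqb x y then (a - b) / Z else 0))).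
  2:{ intros y _. unfold trans. fold Z. destruct Nat.eqb; field; lra. }
  rewrite lsum_plus, lsum_const, length_seq, (rsum_delta r x (fun _ => (a - b) / Z)) by auto.
  unfold Z in *. rewrite minus_INR in * by lia. simpl INR in *. field. lra.
Qed.

Lemma labp_sum x y : lsum (labp L mu nu x y) labs = 1.
Proof. unfold labp, lsum. destruct Nat.eqb; auto. Qed.

Lemma pair_reduce (F : L * obs L -> R) s : (forall c, 0 <= F c) -> NoDup s ->
  exists T, NoDup T /\ lsum F s <= lsum (fun l => lsum (fun t => F (l, t)) T) labs.
Proof.
  intros HF Hs. destruct (exists_nodup (map snd s)) as [T [HT HT2]]. exists T; split; auto.
  eapply Rle_trans. apply (lsum_incl F s (list_prod labs T)); auto.
  - intros [l t] Hin _. apply in_prod_iff. split; auto. apply HT2. change t with (snd (l,t)). apply in_map; auto.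
  - right. clear. induction labs as [|l0 ls IH]; [reflexivity|]. simpl list_prod.
    rewrite lsum_app, lsum_cons, lsum_map, IH. reflexivity.
Qed.

Lemma gfun_sub x m : (x < r)%nat ->
  (forall y, (y < r)%nat -> forall s, NoDup s -> lsum (fun t => lik L r a b omega mu nu y t m) s <= 1) ->
  forall s, NoDup s -> lsum (gfun x m) s <= 1.
Proof.
  intros Hx IH s Hs. destruct (pair_reduce (gfun x m) s (gfun_nonneg x m) Hs) as [T [HT Hle]].
  eapply Rle_trans; [apply Hle|]. unfold gfun, rsum. simpl fst; simpl snd.
  eapply Rle_trans.
  { apply (lsum_le_in _ (fun l => lsum (fun y => trans r a b x y * labp L mu nu x y l) (seq 0 r))).
    intros l _. change (lsum (fun t => lsum (fun y => trans r a b x y * labp L mu nu x y l * lik L r a b omega mu nu y t m) (seq 0 r)) T <= lsum (fun y => trans r a b x y * labp L mu nu x y l) (seq 0 r)).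
    rewrite lsum_swap. apply lsum_le_in. intros y Hy. apply in_seq in Hy.
    rewrite lsum_scal_l. assert (0 <= trans r a b x y * labp L mu nu x y l) by (apply Rmult_le_pos; auto using trans_nonneg, labp_nonneg).
    assert (lsum (fun t => lik L r a b omega mu nu y t m) T <= 1) by (apply IH; auto; lia).
    assert (trans r a b x y * labp L mu nu x y l * lsum (fun t => lik L r a b omega mu nu y t m) T <= trans r a b x y * labp L mu nu x y l * 1)
      by (apply Rmult_le_compat_l; auto). lra. }
  rewrite lsum_swap. right. rewrite <- (trans_sum x Hx). apply lsum_ext_in. intros y _.
  rewrite lsum_scal_l, labp_sum. ring.
Qed.

Let lk := lik L r a b omega mu nu.
Definition cq := lsum (fun l => Rabs ((a * mu l - b * nu l) / Z)) labs.
Lemma cq_nonneg : 0 <= cq.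
Proof. unfold cq; apply lsum_nonneg; intros; apply Rabs_pos. Qed.

Lemma gfun_dbound x x' m D : (x < r)%nat -> (x' < r)%nat ->
  (forall s, NoDup s -> lsum (fun t => Rabs (lk x t m - lk x' t m)) s <= D) ->
  forall s, NoDup s -> lsum (fun c => Rabs (gfun x m c - gfun x' m c)) s <= cq * D.
Proof.
  intros Hx Hx' HD s Hs.
  destruct (pair_reduce (fun c => Rabs (gfun x m c - gfun x' m c)) s (fun c => Rabs_pos _) Hs) as [T [HT Hle]].
  eapply Rle_trans; [apply Hle|]. unfold cq. rewrite <- lsum_scal_r. apply lsum_le_in. intros l _.
  rewrite (lsum_ext_in _ (fun t => Rabs ((a * mu l - b * nu l) / Z) * Rabs (lk x t m - lk x' t m))).
  2:{ intros t _. rewrite gfun_diff by auto. reflexivity. }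
  rewrite lsum_scal_l. apply Rmult_le_compat_l; [apply Rabs_pos|]. auto.
Qed.

Lemma max_len {A} (l : list (list A)) : exists K, forall x, In x l -> (length x <= K)%nat.
Proof. induction l as [|x l [K HK]]; [exists O; simpl; tauto|]. exists (Nat.max (length x) K).
  intros y [<-|Hy]; [lia|]. specialize (HK y Hy); lia. Qed.

Lemma node_reduce (G : list (L * obs L) -> R) (F : obs L -> R) : (forall t, 0 <= F t) ->
  (forall y, F (Leaf y) = 0) -> (forall cs, F (Node cs) = G cs) -> forall s, NoDup s ->
  exists CS K, NoDup CS /\ (forall cs, In cs CS -> (length cs <= K)%nat) /\ lsum F s <= lsum G CS.
Proof.
  intros HF HL HN s Hs.
  destruct (exists_nodup (flat_map (fun t => match t with Node cs => cs :: nil | _ => nil end) s)) as [CS [H1 H2]].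
  destruct (max_len CS) as [K HK]. exists CS, K; split; [|split]; auto.
  eapply Rle_trans. apply (lsum_incl F s (map Node CS)); auto.
  - intros [y|cs] Hin HF0; [rewrite HL in HF0; lra|]. apply in_map, H2, in_flat_map. exists (Node cs); simpl; auto.
  - rewrite lsum_map. right; apply lsum_ext_in; auto.
Qed.

Lemma lik_sub n : forall x, (x < r)%nat -> forall s, NoDup s -> lsum (fun t => lk x t n) s <= 1.
Proof.
  induction n; intros x Hx s Hs.
  - eapply Rle_trans. apply (lsum_incl _ s (Leaf x :: nil)); auto.
    + intros; apply lik_nonneg.
    + intros [y|cs] _ H; unfold lk in H; simpl in H; [|lra]. destruct (Nat.eqb_spec x y); [subst; simpl; auto|lra].
    + rewrite lsum_cons. unfold lk; simpl. rewrite Nat.eqb_refl. unfold lsum; simpl; lra.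
  - destruct (node_reduce (fun cs => poisson (deg r a b omega) (length cs) * Pr _ (gfun x n) cs) (fun t => lk x t (S n)))
      with (s := s) as [CS [K [HCS [HK Hle]]]]; auto.
    + intros; apply lik_nonneg.
    + eapply Rle_trans; [apply Hle|]. eapply Rle_trans.
      * apply (prod_bound _ (gfun x n)); auto.
        -- intros; apply gfun_nonneg.
        -- apply gfun_sub; auto.
        -- intros; apply poisson_nonneg, deg_nonneg.
      * apply poisson_psum, deg_nonneg.
Qed.

Lemma lik_node x cs n : lk x (Node cs) (S n) = poisson (deg r a b omega) (length cs) * Pr _ (gfun x n) cs.
Proof. reflexivity. Qed.

Definition qq := deg r a b omega * cq.

Lemma lik_diff n : forall x x', (x < r)%nat -> (x' < r)%nat -> forall s, NoDup s ->
  lsum (fun t => Rabs (lk x t n - lk x' t n)) s <= 2 * qq ^ n.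
Proof.
  induction n; intros x x' Hx Hx' s Hs.
  - eapply Rle_trans. apply (lsum_incl _ s (Leaf x :: Leaf x' :: nil)); auto.
    + intros; apply Rabs_pos.
    + intros [y|cs] _ H; unfold lk in H; simpl in H.
      * destruct (Nat.eqb_spec x y); [subst; simpl; auto|]. destruct (Nat.eqb_spec x' y); [subst; simpl; auto|].
        replace (0-0) with 0 in H by ring; rewrite Rabs_R0 in H; lra.
      * replace (0-0) with 0 in H by ring; rewrite Rabs_R0 in H; lra.
    + assert (B : forall t, Rabs (lk x t 0 - lk x' t 0) <= 1).
      { intros [y|cs]; unfold lk; simpl; [destruct (Nat.eqb x y), (Nat.eqb x' y)|]; unfold Rabs; destruct Rcase_abs; lra. }
      rewrite !lsum_cons, lsum_nil. pose proof (B (Leaf x)); pose proof (B (Leaf x')). lra.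
  - destruct (node_reduce (fun cs => poisson (deg r a b omega) (length cs) * Rabs (Pr _ (gfun x n) cs - Pr _ (gfun x' n) cs))
       (fun t => Rabs (lk x t (S n) - lk x' t (S n)))) with (s := s) as [CS [K [HCS [HK Hle]]]]; auto.
    + intros; apply Rabs_pos.
    + intros; unfold lk; simpl. replace (0-0) with 0 by ring; apply Rabs_R0.
    + intros cs. rewrite !lik_node.
      rewrite <- Rmult_minus_distr_l, Rabs_mult, (Rabs_pos_eq (poisson _ _)); auto. apply poisson_nonneg, deg_nonneg.
    + eapply Rle_trans; [apply Hle|].
      assert (HD : 0 <= cq * (2 * qq ^ n)).
      { apply Rmult_le_pos; [apply cq_nonneg|]. apply Rmult_le_pos; [lra|]. apply pow_le. unfold qq. apply Rmult_le_pos; [apply deg_nonneg|apply cq_nonneg]. }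
      eapply Rle_trans.
      * apply (prod_diff _ (gfun x n) (gfun x' n) (cq * (2 * qq ^ n))); auto.
        -- intros; apply gfun_nonneg.
        -- intros; apply gfun_nonneg.
        -- apply gfun_sub; auto. intros; apply lik_sub; auto.
        -- apply gfun_sub; auto. intros; apply lik_sub; auto.
        -- apply gfun_dbound; auto.
        -- intros; apply poisson_nonneg, deg_nonneg.
      * eapply Rle_trans. apply Rmult_le_compat_l; [apply HD|]. apply poisson_mean, deg_nonneg.
        right. unfold qq. simpl. ring.
Qed.

Lemma qq_eq : qq = omega * tau L r a b mu nu labs.
Proof.
  pose proof Z_pos. unfold qq, cq, tau, deg. fold Z.
  rewrite (lsum_ext_in _ (fun l => Rabs (a * mu l - b * nu l) * / Z)).
  2:{ intros l _. unfold Rdiv. rewrite Rabs_mult, Rabs_inv, (Rabs_pos_eq Z); lra. }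
  rewrite lsum_scal_r. change (fold_right Rplus 0 (map (fun l => Rabs (a * mu l - b * nu l)) labs))
    with (lsum (fun l => Rabs (a * mu l - b * nu l)) labs).
  assert (INR r <> 0) by (apply not_0_INR; lia). field. split; [lra|]. split; auto. lra.
Qed.

Lemma pointwise x eps t R1 : 0 < eps ->
  (if Rlt_dec eps (Rabs (posterior L r a b omega mu nu x t R1 - / INR r)) then obs_prob L r a b omega mu nu t R1 else 0)
  <= / (eps * INR r * INR r) * lsum (fun y => Rabs (lk x t R1 - lk y t R1)) (seq 0 r).
Proof.
  intros He. assert (Hr0 : 0 < INR r) by (apply lt_0_INR; lia).
  assert (HM : 0 <= lsum (fun y => Rabs (lk x t R1 - lk y t R1)) (seq 0 r)) by (apply lsum_nonneg; intros; apply Rabs_pos).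
  assert (Hc : 0 < / (eps * INR r * INR r)) by (apply Rinv_0_lt_compat; apply Rmult_lt_0_compat; [apply Rmult_lt_0_compat|]; lra).
  assert (Hnn : 0 <= / (eps * INR r * INR r) * lsum (fun y => Rabs (lk x t R1 - lk y t R1)) (seq 0 r)) by (apply Rmult_le_pos; lra).
  destruct Rlt_dec as [Hbad|]; [|auto].
  unfold posterior, obs_prob in *. change (rsum r (fun y => lik L r a b omega mu nu y t R1)) with (lsum (fun y => lk y t R1) (seq 0 r)) in *.
  set (Sg := lsum (fun y => lk y t R1) (seq 0 r)) in *.
  set (M := lsum (fun y => Rabs (lk x t R1 - lk y t R1)) (seq 0 r)) in *.
  assert (HS0 : 0 <= Sg) by (apply lsum_nonneg; intros; apply lik_nonneg).
  destruct (Req_dec Sg 0) as [E|E]. { rewrite E, Rmult_0_r; auto. }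
  assert (HSp : 0 < Sg) by lra.
  assert (Hu : INR r * lk x t R1 - Sg = lsum (fun y => lk x t R1 - lk y t R1) (seq 0 r)).
  { rewrite (lsum_ext_in _ (fun y => lk x t R1 + (-1) * lk y t R1)) by (intros; ring).
    rewrite lsum_plus, lsum_const, lsum_scal_l, length_seq. unfold Sg. ring. }
  assert (HuM : Rabs (INR r * lk x t R1 - Sg) <= M) by (rewrite Hu; apply lsum_abs).
  change (lik L r a b omega mu nu x t R1) with (lk x t R1) in Hbad.
  replace (lk x t R1 / Sg - / INR r) with ((INR r * lk x t R1 - Sg) / (INR r * Sg)) in Hbad by (field; lra).
  unfold Rdiv in Hbad. rewrite Rabs_mult, (Rabs_pos_eq (/ (INR r * Sg))) in Hbad.
  2:{ left; apply Rinv_0_lt_compat, Rmult_lt_0_compat; lra. }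
  assert (H1 : eps * (INR r * Sg) < M).
  { assert (Hp : 0 < INR r * Sg) by (apply Rmult_lt_0_compat; lra).
    apply (Rmult_lt_compat_r (INR r * Sg)) in Hbad; auto.
    rewrite Rmult_assoc, Rinv_l, Rmult_1_r in Hbad by lra. lra. }
  replace (/ INR r * Sg) with (/ (eps * INR r * INR r) * (eps * (INR r * Sg))) by (field; lra).
  left. apply Rmult_lt_compat_l; auto.
Qed.

Lemma final_bound (Hsub : omega < / tau L r a b mu nu labs) x (Hx : (x < r)%nat) eps delta :
  0 < eps -> 0 < delta ->
  exists R0 : nat, forall R1 : nat, (R0 <= R1)%nat -> bad_prob_le L r a b omega mu nu x eps R1 delta.
Proof.
  intros He Hd. assert (Hr0 : 0 < INR r) by (apply lt_0_INR; lia).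
  assert (Hq0 : 0 <= qq) by (unfold qq; apply Rmult_le_pos; [apply deg_nonneg|apply cq_nonneg]).
  assert (Hq1 : qq < 1).
  { rewrite qq_eq in *. destruct (Req_dec (tau L r a b mu nu labs) 0) as [E|E].
    - rewrite E, Rinv_0 in Hsub; lra.
    - assert (Ht0 : 0 <= tau L r a b mu nu labs).
      { unfold tau. apply Rmult_le_pos. left; apply Rinv_0_lt_compat, Rmult_lt_0_compat; lra.
        change (0 <= lsum (fun l => Rabs (a * mu l - b * nu l)) labs). apply lsum_nonneg; intros; apply Rabs_pos. }
      assert (Ht : 0 < tau L r a b mu nu labs) by lra.
      apply (Rmult_lt_compat_r (tau L r a b mu nu labs)) in Hsub; auto. rewrite Rinv_l in Hsub; lra. }
  destruct (pow_lt_1_zero qq (ltac:(rewrite Rabs_pos_eq; auto)) (delta * eps * INR r / 2)) as [N HN].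
  { apply Rmult_lt_0_compat; [|lra]. apply Rmult_lt_0_compat; [apply Rmult_lt_0_compat|]; lra. }
  exists N. intros R1 HR1 s Hs.
  change (fold_right Rplus 0 (map (fun t => if Rlt_dec eps (Rabs (posterior L r a b omega mu nu x t R1 - / INR r))
                     then obs_prob L r a b omega mu nu t R1 else 0) s))
   with (lsum (fun t => if Rlt_dec eps (Rabs (posterior L r a b omega mu nu x t R1 - / INR r))
                     then obs_prob L r a b omega mu nu t R1 else 0) s).
  eapply Rle_trans. { apply lsum_le_in. intros t _. apply pointwise; auto. }
  rewrite lsum_scal_l, lsum_swap.
  eapply Rle_trans.
  { apply Rmult_le_compat_l. left; apply Rinv_0_lt_compat; apply Rmult_lt_0_compat; [apply Rmult_lt_0_compat|]; lra.
    apply (lsum_le_in _ (fun _ => 2 * qq ^ R1)). intros y Hy. apply in_seq in Hy. apply lik_diff; auto; lia. }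
  rewrite lsum_const, length_seq. specialize (HN R1 HR1). rewrite Rabs_pos_eq in HN by (apply pow_le; auto).
  replace (/ (eps * INR r * INR r) * (INR r * (2 * qq ^ R1))) with (qq ^ R1 * (2 / (eps * INR r))) by (field; lra).
  replace delta with (delta * eps * INR r / 2 * (2 / (eps * INR r))) by (field; lra).
  left. apply Rmult_lt_compat_r; auto. apply Rdiv_lt_0_compat; [lra|]. apply Rmult_lt_0_compat; lra.
Qed.
End GWproof.

Theorem lemma2 (L : Type) (labs : list L) (r : nat) (a b omega : R)
  (mu nu : L -> R)
  (Hlabs_nodup : NoDup labs) (Hlabs_full : forall l : L, In l labs)
  (Hr : (2 <= r)%nat) (Ha : 0 < a) (Hb : 0 < b) (Homega : 0 < omega)
  (Hmu_nonneg : forall l, 0 <= mu l) (Hmu_sum : fold_right Rplus 0 (map mu labs) = 1)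
  (Hnu_nonneg : forall l, 0 <= nu l) (Hnu_sum : fold_right Rplus 0 (map nu labs) = 1)
  (Hdistinct : exists l, mu l <> nu l)
  (Hsub : omega < / tau L r a b mu nu labs) :
  forall x : nat, (x < r)%nat ->
  forall eps delta : R, 0 < eps -> 0 < delta ->
  exists R0 : nat, forall R1 : nat, (R0 <= R1)%nat ->
    bad_prob_le L r a b omega mu nu x eps R1 delta.
Proof.
  intros x Hx eps delta He Hd.
  eapply final_bound; eauto.
Qed.
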